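(* For all logarithmic hypermonomials $\mathfrak{m},\mathfrak{n}\in\mathfrak{L}$: (i) $(\mathfrak{m}\mathfrak{n})^\dagger=\mathfrak{m}^\dagger+\mathfrak{n}^\dagger$, and $(\mathfrak{m}^t)^\dagger=t\mathfrak{m}^\dagger$ for $t\in\mathbb{R}$; (ii) $(\mathfrak{m}\mathfrak{n})'=\mathfrak{m}'\mathfrak{n}+\mathfrak{m}\mathfrak{n}'$; (iii) if $\mathfrak{m}\ne1$ then $\mathfrak{m}'\neq0$ and $\mathfrak{m}^\dagger\ne0$; (iv) if $\mathfrak{m}\prec1$ and $\mathfrak{n}\ne1$ then $\mathfrak{m}'\prec\mathfrak{n}^\dagger$; (v) if $\mathfrak{m}\prec\mathfrak{n}\ne1$ then $\mathfrak{m}'\prec\mathfrak{n}'$; (vi) if $\mathfrak{m}\in\mathfrak{L}_{<\alpha}$ then $\operatorname{supp}\mathfrak{m}'\subseteq\{\ell_\beta^\dagger:\beta<\alpha\}\,\mathfrak{m}$.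
   Context: Fix distinct symbols $\ell_\alpha$ for all ordinals. Exponent sequences $r=(r_\beta)$: reals over all ordinals, zero beyond some ordinal; monomials $\ell^r=\prod\ell_\beta^{r_\beta}$ form the abelian group $\mathfrak{L}$ ($\ell^r\ell^s=\ell^{r+s}$, $(\ell^r)^t=\ell^{tr}$), totally ordered by $\ell^r\prec\ell^s$ iff $r\ne s$ and $r_\beta<s_\beta$ at the least differing $\beta$; $\ell_\alpha$ has exponent $1$ at $\alpha$, else $0$. $\mathfrak{L}_{<\alpha}$: monomials with $r_\beta=0$ for $\beta\ge\alpha$. $\mathbb{L}_{<\alpha}=\mathbb{R}[[\mathfrak{L}_{<\alpha}]]$ is the Hahn field of real series over $\mathfrak{L}_{<\alpha}$ with well-based support, $\mathbb{L}=\bigcup\mathbb{L}_{<\alpha}$; for $f,g\in\mathbb{L}$, $f\prec g$ iff the largest monomial of $\operatorname{supp}f$ is $\prec$ that of $\operatorname{supp}g$ (with $0$ below all monomials). Define $\ell_\beta^\dagger=\prod_{\gamma\le\beta}\ell_\gamma^{-1}$ and for $\mathfrak{m}=\ell^r$: $\mathfrak{m}^\dagger=\sum_\beta r_\beta\ell_\beta^\dagger\in\mathbb{L}$ and $\mathfrak{m}'=\mathfrak{m}\,\mathfrak{m}^\dagger\in\mathbb{L}$. *)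

(* Defs.v *)
From HB Require Import structures.
From mathcomp Require Import all_boot all_order all_algebra.
From mathcomp Require Import boolp reals.
Set Implicit Arguments. Unset Strict Implicit. Unset Printing Implicit Defensive.
Import Order.TTheory GRing.Theory Num.Theory.
Local Open Scope ring_scope.

(* Ordinals are modelled by an arbitrary well-ordered type O.
   An exponent sequence r : O -> R represents the monomial l^r. *)
Section LogHyper.
Variables (R : realType) (d : Order.disp_t) (O : orderType d).

Definition mono := O -> R.

Definition mmul (r s : mono) : mono := fun b => r b + s b.
Definition mpow (r : mono) (t : R) : mono := fun b => t * r b.
Definition mone : mono := fun _ => 0.
Definition minv (r : mono) : mono := fun b => - r b.

Definition mlt (r s : mono) : Prop :=
  exists b : O, (forall g : O, (g < b)%O -> r g = s g) /\ r b < s b.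

Definition ell (a : O) : mono := fun b => if b == a then 1 else 0.

(* l_b^dagger = prod_{g <= b} l_g^{-1} *)
Definition ldag (b : O) : mono := fun g => if (g <= b)%O then -1 else 0.

Definition series := mono -> R.

Definition supp (f : series) : mono -> Prop := fun u => f u != 0.

Definition wellbased (S : mono -> Prop) : Prop :=
  forall T : mono -> Prop, (forall u, T u -> S u) -> (exists u, T u) ->
  exists u, T u /\ forall v, T v -> ~ mlt u v.

Definition hahn (f : series) : Prop := wellbased (supp f).

Definition sadd (f g : series) : series := fun u => f u + g u.
Definition sscale (t : R) (f : series) : series := fun u => t * f u.
Definition szero : series := fun _ => 0.
Definition smmul (m : mono) (f : series) : series := fun u => f (mmul u (minv m)).

Definition is_lead (f : series) (u : mono) : Prop :=
  supp f u /\ forall v, supp f v -> ~ mlt u v.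

(* f \prec g for f, g in the Hahn field (0 lies below all monomials) *)
Definition slt (f g : series) : Prop :=
  hahn f /\ hahn g /\
  exists v, is_lead g v /\ forall u, is_lead f u -> mlt u v.

(* m^dagger = sum_b r_b l_b^dagger  (the l_b^dagger are pairwise distinct) *)
Definition mdag (r : mono) : series := fun u =>
  match pselect (exists b, u = ldag b) with
  | left H => r (projT1 (cid H))
  | right _ => 0
  end.

Definition mder (r : mono) : series := smmul r (mdag r).

End LogHyper.

(* Main.v *)
Require Import Defs.
From HB Require Import structures.
From mathcomp Require Import all_boot all_order all_algebra.
From mathcomp Require Import boolp reals.
Import Order.TTheory GRing.Theory Num.Theory.
Local Open Scope ring_scope.
Set Implicit Arguments. Unset Strict Implicit.

Lemma ldag_val (R : realType) (d : Order.disp_t) (O : orderType d) (b g : O) :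
  ldag R b g = if (g <= b)%O then -1 else 0.
Proof. by []. Qed.

Lemma ldag_inj (R : realType) (d : Order.disp_t) (O : orderType d) (b c : O) :
  ldag R b = ldag R c -> b = c.
Proof.
move=> E.
have h1 := congr1 (fun f => f b) E; have h2 := congr1 (fun f => f c) E.
move: h1 h2; rewrite /= !ldag_val !lexx.
have neq : (-1 : R) <> 0 by move/eqP; rewrite oppr_eq0 oner_eq0.
case: ifP => [hbc|_] h1; last by exfalso; apply: neq.
case: ifP => [hcb|_] h2; last by exfalso; apply: neq; rewrite h2.
by apply: le_anti; rewrite hbc hcb.
Qed.

Lemma mdag_ldag (R : realType) (d : Order.disp_t) (O : orderType d) (r : mono R O) (b : O) :
  mdag r (ldag R b) = r b.
Proof.
rewrite /mdag; case: pselect => [H|H]; last by exfalso; apply: H; exists b.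
case: (cid H) => c /= hc. by rewrite (ldag_inj hc).
Qed.

Lemma mdag_out (R : realType) (d : Order.disp_t) (O : orderType d) (r : mono R O) u :
  ~ (exists b, u = ldag R b) -> mdag r u = 0.
Proof. by rewrite /mdag; case: pselect. Qed.

Definition PS (R : realType) (d : Order.disp_t) (O : orderType d) (r z : mono R O) (u : mono R O) :=
  exists b, u = mmul (ldag R b) z /\ r b != 0.

Lemma mmul_mone (R : realType) (d : Order.disp_t) (O : orderType d) (x : mono R O) :
  mmul x (@mone R d O) = x.
Proof. by apply: funext => g; rewrite /mmul /mone addr0. Qed.

Lemma mmulC (R : realType) (d : Order.disp_t) (O : orderType d) (x y : mono R O) :
  mmul x y = mmul y x.
Proof. by apply: funext => g; rewrite /mmul addrC. Qed.

Lemma mmulK (R : realType) (d : Order.disp_t) (O : orderType d) (x y : mono R O) :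
  mmul (mmul x y) (minv y) = x.
Proof. by apply: funext => g; rewrite /mmul /minv addrK. Qed.

Lemma mmulKV (R : realType) (d : Order.disp_t) (O : orderType d) (x y : mono R O) :
  mmul (mmul x (minv y)) y = x.
Proof. by apply: funext => g; rewrite /mmul /minv subrK. Qed.

Lemma supp_mdag (R : realType) (d : Order.disp_t) (O : orderType d) (r : mono R O) u :
  supp (mdag r) u <-> PS r (@mone R d O) u.
Proof.
split.
- rewrite /supp => H.
  have [[b hb]|nb] := pselect (exists b, u = ldag R b); last by rewrite mdag_out // eqxx in H.
  by exists b; rewrite mmul_mone; split => //; rewrite -(mdag_ldag r) -hb.
- by case=> b [-> hb]; rewrite /supp mmul_mone mdag_ldag.
Qed.

Lemma supp_mder (R : realType) (d : Order.disp_t) (O : orderType d) (r : mono R O) u :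
  supp (mder r) u <-> PS r r u.
Proof.
rewrite /mder /smmul /supp; split.
- move=> /(supp_mdag r) [b [hb hr]]; exists b; split => //.
  by rewrite -(mmulKV u r) hb mmul_mone.
- by case=> b [-> hb]; apply/(supp_mdag r); exists b; rewrite mmulK mmul_mone.
Qed.

Lemma mlt_shift (R : realType) (d : Order.disp_t) (O : orderType d) (x y z : mono R O) :
  mlt x y -> mlt (mmul x z) (mmul y z).
Proof.
case=> b [h1 h2]; exists b; split; first by move=> g /h1; rewrite /mmul => ->.
by rewrite /mmul ltrD2r.
Qed.

Lemma mlt_unshift (R : realType) (d : Order.disp_t) (O : orderType d) (x y z : mono R O) :
  mlt (mmul x z) (mmul y z) -> mlt x y.
Proof. by move=> /(mlt_shift (minv z)); rewrite !mmulK. Qed.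

Lemma mlt_irr (R : realType) (d : Order.disp_t) (O : orderType d) (x : mono R O) :
  ~ mlt x x.
Proof. by case=> b [_]; rewrite ltxx. Qed.

Lemma mlt_ldag (R : realType) (d : Order.disp_t) (O : orderType d) (b c : O) :
  mlt (ldag R b) (ldag R c) -> (c < b)%O.
Proof.
case=> g [_]; rewrite !ldag_val.
case: ifP => gb; case: ifP => gc; rewrite ?ltxx ?ltrN10 //.
- by move=> _; apply: (lt_le_trans _ gb); rewrite ltNge gc.
- by rewrite ltr0N1. 
Qed.

Lemma wf_min (d : Order.disp_t) (O : orderType d)
  (wfO : well_founded (fun x y : O => (x < y)%O)) (P : O -> Prop) :
  (exists x, P x) -> exists x, P x /\ forall y, P y -> (x <= y)%O.
Proof.
move=> [x0 Px0]; apply: contrapT => nm.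
suff : forall x, ~ P x by move/(_ x0).
move=> x; elim: (wfO x) => {}x _ IH Px; apply: nm; exists x; split => // y Py.
by rewrite leNgt; apply/negP => yx; apply: (IH y yx Py).
Qed.

Lemma ldag_lt (R : realType) (d : Order.disp_t) (O : orderType d)
  (wfO : well_founded (fun x y : O => (x < y)%O)) (b c : O) :
  (c < b)%O -> mlt (ldag R b) (ldag R c).
Proof.
move=> cb.
have [g [cg gmin]] := wf_min wfO (ex_intro (fun g => (c < g)%O) b cb).
exists g; split.
- move=> h hg; rewrite !ldag_val.
  have hc : (h <= c)%O by rewrite leNgt; apply/negP => /gmin; rewrite leNgt hg.
  by rewrite hc (le_trans hc (ltW cb)).
- by rewrite !ldag_val (gmin _ cb) leNgt cg /= ltrN10.
Qed.

Lemma hahn_PS (R : realType) (d : Order.disp_t) (O : orderType d)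
  (wfO : well_founded (fun x y : O => (x < y)%O)) (f : series R O) (r z : mono R O) :
  (forall u, supp f u <-> PS r z u) -> hahn f.
Proof.
move=> Hf T HT [u0 Tu0].
have [b0 [eu0 hb0]] := (Hf u0).1 (HT _ Tu0); rewrite eu0 in Tu0.
have [b [[hb Tb] bmin]] := wf_min wfO
  (ex_intro (fun b => r b != 0 /\ T (mmul (ldag R b) z)) b0 (conj hb0 Tu0)).
exists (mmul (ldag R b) z); split => // v Tv.
have [c [vc hc]] := (Hf v).1 (HT _ Tv).
rewrite vc => /mlt_unshift /mlt_ldag cb.
have := bmin c; rewrite -vc => /(_ (conj hc Tv)); by rewrite leNgt cb.
Qed.

Lemma lead_PS1 (R : realType) (d : Order.disp_t) (O : orderType d)
  (wfO : well_founded (fun x y : O => (x < y)%O)) (f : series R O) (r z : mono R O) u :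
  (forall u, supp f u <-> PS r z u) -> is_lead f u ->
  exists b, u = mmul (ldag R b) z /\ r b != 0 /\ forall c, r c != 0 -> (b <= c)%O.
Proof.
move=> Hf [su umax]; have [b [ub hb]] := (Hf u).1 su.
exists b; split => //; split => // c hc.
rewrite leNgt; apply/negP => cb; apply: (umax (mmul (ldag R c) z)).
  by apply/Hf; exists c.
by rewrite ub; apply: mlt_shift; apply: ldag_lt.
Qed.

Lemma lead_PS2 (R : realType) (d : Order.disp_t) (O : orderType d)
  (f : series R O) (r z : mono R O) b :
  (forall u, supp f u <-> PS r z u) -> r b != 0 -> (forall c, r c != 0 -> (b <= c)%O) ->
  is_lead f (mmul (ldag R b) z).
Proof.
move=> Hf hb bmin; split; first by apply/Hf; exists b.
move=> v /Hf [c [-> hc]] /mlt_unshift /mlt_ldag cb.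
by have := bmin c hc; rewrite leNgt cb.
Qed.

Lemma slt_PS (R : realType) (d : Order.disp_t) (O : orderType d)
  (wfO : well_founded (fun x y : O => (x < y)%O)) (f g : series R O) (r z s w : mono R O) :
  (forall u, supp f u <-> PS r z u) -> (forall u, supp g u <-> PS s w u) ->
  s <> @mone R d O ->
  (forall b1 b2, r b1 != 0 -> (forall c, r c != 0 -> (b1 <= c)%O) ->
     s b2 != 0 -> (forall c, s c != 0 -> (b2 <= c)%O) ->
     mlt (mmul (ldag R b1) z) (mmul (ldag R b2) w)) ->
  slt f g.
Proof.
move=> Hf Hg s1 Hc; split; first exact: hahn_PS Hf.
split; first exact: hahn_PS Hg.
have [b0 hb0] : exists b, s b != 0.
  apply: contrapT => nb; apply: s1; apply: funext => b; rewrite /mone.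
  by apply/eqP; apply: contrapT => hb; apply: nb; exists b; apply/negP.
have [b2 [h2 m2]] := wf_min wfO (ex_intro (fun b => s b != 0) b0 hb0).
exists (mmul (ldag R b2) w); split; first exact: lead_PS2 Hg h2 m2.
move=> u /(lead_PS1 wfO Hf) [b1 [-> [h1 m1]]]; exact: Hc.
Qed.

Lemma below_min (R : realType) (d : Order.disp_t) (O : orderType d) (r : mono R O) b g :
  (forall c, r c != 0 -> (b <= c)%O) -> (g < b)%O -> r g = 0.
Proof.
move=> bm gb; apply/eqP; apply: contrapT => /negP /bm; by rewrite leNgt gb.
Qed.

Lemma nonone (R : realType) (d : Order.disp_t) (O : orderType d) (s : mono R O) :
  s <> @mone R d O -> exists b, s b != 0.
Proof.
move=> s1; apply: contrapT => nb; apply: s1; apply: funext => b; rewrite /mone.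
by apply/eqP; apply: contrapT => hb; apply: nb; exists b; apply/negP.
Qed.

Lemma cmp_iv (R : realType) (d : Order.disp_t) (O : orderType d)
  (wfO : well_founded (fun x y : O => (x < y)%O)) (m n : mono R O) b1 b0 :
  mlt m (@mone R d O) -> m b1 != 0 -> (forall c, m c != 0 -> (b1 <= c)%O) ->
  (forall c, n c != 0 -> (b0 <= c)%O) ->
  mlt (mmul (ldag R b1) m) (mmul (ldag R b0) (@mone R d O)).
Proof.
move=> [b [hbel hb]] h1 m1 m0.
have mb1 : m b1 < 0.
  have : (b1 <= b)%O by apply: m1; rewrite ltr0_neq0.
  rewrite le_eqVlt => /orP [/eqP -> //|lt1].
  by move: h1; rewrite (hbel _ lt1) eqxx.
case: (leP b1 b0) => c10.
- exists b1; split.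
  + move=> g gb; rewrite /mmul !ldag_val (ltW gb) (le_trans (ltW gb) c10).
    by rewrite (below_min m1 gb).
  + by rewrite /mmul !ldag_val lexx c10 /mone ltrD2l.
- have [g [cg gmin]] := wf_min wfO (ex_intro (fun g => (b0 < g)%O) b1 c10).
  have gb1 : (g <= b1)%O by apply: gmin.
  exists g; split.
  + move=> h hg; rewrite /mmul !ldag_val /mone.
    have hc : (h <= b0)%O by rewrite leNgt; apply/negP => /gmin; rewrite leNgt hg.
    have hb1 : (h < b1)%O by apply: lt_le_trans hg gb1.
    by rewrite hc (ltW hb1) (below_min m1 hb1).
  + rewrite /mmul !ldag_val /mone gb1 leNgt cg /= addr0.
    have : m g <= 0.
      move: gb1; rewrite le_eqVlt => /orP [/eqP -> |lt]; first exact: ltW.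
      by rewrite (below_min m1 lt).
    move=> mg; have h : -1 + m g <= -1 + 0 by rewrite lerD2l.
    by apply: le_lt_trans h _; rewrite addr0 ltrN10.
Qed.

Lemma cmp_v (R : realType) (d : Order.disp_t) (O : orderType d) (m n : mono R O) b1 b2 :
  mlt m n -> m b1 != 0 -> (forall c, m c != 0 -> (b1 <= c)%O) ->
  n b2 != 0 -> (forall c, n c != 0 -> (b2 <= c)%O) ->
  mlt (mmul (ldag R b1) m) (mmul (ldag R b2) n).
Proof.
move=> [b [hbel hb]] h1 m1 h2 m2.
case: (ltgtP b1 b2) => c12.
- have eb : b = b1.
    case: (ltgtP b b1) => // c.
    + by move: hb; rewrite (below_min m1 c) (below_min m2 (lt_trans c c12)) ltxx.
    + by move: h1; rewrite (hbel _ c) (below_min m2 c12) eqxx.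
  subst b; exists b1; split.
  + move=> g gb; rewrite /mmul !ldag_val (ltW gb) (ltW (lt_trans gb c12)).
    by rewrite (below_min m1 gb) (below_min m2 (lt_trans gb c12)).
  + by rewrite /mmul !ldag_val lexx (ltW c12) ltrD2l.
- have eb : b = b2.
    case: (ltgtP b b2) => // c.
    + by move: hb; rewrite (below_min m2 c) (below_min m1 (lt_trans c c12)) ltxx.
    + by move: h2; rewrite -(hbel _ c) (below_min m1 c12) eqxx.
  subst b; exists b2; split.
  + move=> g gb; rewrite /mmul !ldag_val (ltW gb) (ltW (lt_trans gb c12)).
    by rewrite (below_min m2 gb) (below_min m1 (lt_trans gb c12)).
  + by rewrite /mmul !ldag_val lexx (ltW c12) ltrD2l.
- subst b2; rewrite (mmulC _ m) (mmulC _ n); apply: mlt_shift; exists b; split => //.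
Qed.

Lemma mdag_mul (R : realType) (d : Order.disp_t) (O : orderType d) (m n : mono R O) :
  mdag (mmul m n) = sadd (mdag m) (mdag n).
Proof.
apply: funext => u; rewrite /sadd.
have [[b ->]|nb] := pselect (exists b, u = ldag R b); first by rewrite !mdag_ldag.
by rewrite !mdag_out // addr0.
Qed.

Unset Implicit Arguments.
Set Strict Implicit.

Theorem lemma3p1 (R : realType) (d : Order.disp_t) (O : orderType d)
  (wfO : well_founded (fun x y : O => (x < y)%O))
  (m n : mono R O) :
  (* (i) *)
  (mdag (mmul m n) = sadd (mdag m) (mdag n) /\
   forall t : R, mdag (mpow m t) = sscale t (mdag m)) /\
  (* (ii) *)
  mder (mmul m n) = sadd (smmul n (mder m)) (smmul m (mder n)) /\
  (* (iii) *)
  (m <> @mone R d O -> mder m <> @szero R d O /\ mdag m <> @szero R d O) /\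
  (* (iv) *)
  (mlt m (@mone R d O) -> n <> @mone R d O -> slt (mder m) (mdag n)) /\
  (* (v) *)
  (mlt m n -> n <> @mone R d O -> slt (mder m) (mder n)) /\
  (* (vi) *)
  (forall a : O, (forall b : O, (a <= b)%O -> m b = 0) ->
     forall u : mono R O, supp (mder m) u ->
       exists b : O, (b < a)%O /\ u = mmul (@ldag R d O b) m).
Proof.
split; [split; first exact: mdag_mul|].
  move=> t; apply: funext => u; rewrite /sscale.
  have [[b ->]|nb] := pselect (exists b, u = ldag R b); first by rewrite !mdag_ldag.
  by rewrite !mdag_out // mulr0.
split.
  apply: funext => u; rewrite /mder /smmul /sadd mdag_mul /sadd.
  have e1 : mmul (mmul u (minv n)) (minv m) = mmul u (minv (mmul m n)).
    by apply: funext => g; rewrite /mmul /minv opprD (addrC (- m g)) addrA.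
  have e2 : mmul (mmul u (minv m)) (minv n) = mmul u (minv (mmul m n)).
    by apply: funext => g; rewrite /mmul /minv opprD addrA.
  by rewrite e1 e2.
split.
  move=> /nonone [b hb]; split => E.
  - have : supp (mder m) (mmul (ldag R b) m) by apply/supp_mder; exists b.
    by rewrite E /supp /szero eqxx.
  - have : supp (mdag m) (mmul (ldag R b) (@mone R d O)) by apply/supp_mdag; exists b.
    by rewrite E /supp /szero eqxx.
split.
  move=> mlt1 n1; apply: (slt_PS wfO (@supp_mder _ _ _ m) (@supp_mdag _ _ _ n) n1).
  by move=> b1 b2 h1 m1 h2 m2; exact: (cmp_iv wfO mlt1 h1 m1 m2).
split.
  move=> mn n1; apply: (slt_PS wfO (@supp_mder _ _ _ m) (@supp_mder _ _ _ n) n1).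
  by move=> b1 b2 h1 m1 h2 m2; exact: (cmp_v mn h1 m1 h2 m2).
move=> a ha u /supp_mder [b [-> hb]]; exists b; split => //.
by rewrite ltNge; apply/negP => /ha hb0; move: hb; rewrite hb0 eqxx.
Qed.
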